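(* Let $\psi$ be an $n$-dimensional unique sink orientation and $v \in Q^n$ a vertex whose set of out-neighbors $\mathcal{N}^+(v)$ is already known. Then there is an algorithm that joins the vertices in $\mathcal{N}^+(v)$, i.e. outputs a vertex $w$ such that $u \rightsquigarrow w$ for every $u \in \mathcal{N}^+(v)$, using $|s_\psi(v)|$ many vertex evaluations.
   Context: Let $Q^n = 2^{[n]}$ be the vertex set of the $n$-cube, with $u,v$ adjacent iff $|u\oplus v|=1$; faces are $F_{J,v}=\{u : v\oplus u\subseteq J\}$ for $J\subseteq[n]$. A unique sink orientation (USO) is an orientation of the cube's edges such that every nonempty face has a unique sink (vertex with no outgoing edges within the face). The outmap $s_\psi(v)$ is the set of coordinates $j$ such that the edge $\{v,v\oplus\{j\}\}$ is directed away from $v$. $\mathcal{N}^+(v) = \{v\oplus\{j\} : j\in s_\psi(v)\}$ is the set of out-neighbors of $v$. $u \rightsquigarrow w$ means there is a directed path (possibly of length $0$) from $u$ to $w$. Computation is in the vertex oracle model: a vertex evaluation is a query that, given $v$, returns $s_\psi(v)$. *)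

(* Defs.v *)
From mathcomp Require Import all_boot.
Set Implicit Arguments. Unset Strict Implicit. Unset Printing Implicit Defensive.

(* Vertices of the n-cube Q^n = 2^[n] are subsets of 'I_n. *)
Notation vertex n := {set 'I_n}.

Definition symd (n : nat) (u w : vertex n) : vertex n := (u :\: w) :|: (w :\: u).

(* An orientation is given by its outmap s : Q^n -> 2^[n]: j \in s v iff the
   edge {v, v (+) {j}} is directed away from v. *)
Definition is_orientation (n : nat) (s : vertex n -> vertex n) : Prop :=
  forall (v : vertex n) (j : 'I_n),
    (j \in s v) = (j \notin s (symd v [set j])).

Definition face (n : nat) (J v : vertex n) : {set vertex n} :=
  [set u | symd v u \subset J].

Definition is_sink_in (n : nat) (s : vertex n -> vertex n) (J v u : vertex n) : bool :=
  (u \in face J v) && (s u :&: J == set0).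

Definition is_USO (n : nat) (s : vertex n -> vertex n) : Prop :=
  is_orientation s /\
  forall J v : vertex n, exists! u : vertex n, is_sink_in s J v u.

Definition out_edge (n : nat) (s : vertex n -> vertex n) : rel (vertex n) :=
  fun a b => [exists j, (j \in s a) && (b == symd a [set j])].

Definition reaches (n : nat) (s : vertex n -> vertex n) (u w : vertex n) : bool :=
  connect (out_edge s) u w.

Definition out_nbrs (n : nat) (s : vertex n -> vertex n) (v : vertex n) : {set vertex n} :=
  [set symd v [set j] | j in s v].

(* Vertex oracle model: an (adaptive, deterministic) algorithm is a decision
   tree which either outputs a vertex or evaluates the outmap at a vertex and
   continues depending on the answer. *)
Inductive oracle_alg (n : nat) : Type :=
| Output of vertex n
| Query of vertex n & (vertex n -> oracle_alg n).

Fixpoint alg_output (n : nat) (A : oracle_alg n) (s : vertex n -> vertex n) : vertex n :=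
  match A with
  | Output w => w
  | Query q k => alg_output (k (s q)) s
  end.

Fixpoint alg_queries (n : nat) (A : oracle_alg n) (s : vertex n -> vertex n) : nat :=
  match A with
  | Output _ => 0
  | Query q k => (alg_queries (k (s q)) s).+1
  end.

(* Main.v *)
Require Import Defs.
From mathcomp Require Import all_boot.
Set Implicit Arguments. Unset Strict Implicit. Unset Printing Implicit Defensive.

Section S.
Variable n : nat.
Implicit Types u w x y z : vertex n.

Lemma in_symd (u w : vertex n) i : (i \in symd u w) = (i \in u) (+) (i \in w).
Proof. rewrite /symd !inE; by case: (i \in u); case: (i \in w). Qed.

Definition Sinky (s : vertex n -> vertex n) :=
  forall J v : vertex n, exists! u, is_sink_in s J v u.

Lemma sink_eq (s : vertex n -> vertex n) (H : Sinky s) J v x y :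
  is_sink_in s J v x -> is_sink_in s J v y -> x = y.
Proof.
move=> hx hy; have [z [_ hz]] := H J v.
by rewrite -(hz _ hx) -(hz _ hy).
Qed.

Lemma in_face J v u : (u \in face J v) = (symd v u \subset J).
Proof. by rewrite /face inE. Qed.

Lemma reach_edge (s : vertex n -> vertex n) u j : j \in s u -> reaches s u (symd u [set j]).
Proof. move=> h; apply: connect1; apply/existsP; exists j; by rewrite h eqxx. Qed.

Lemma symdC u w : symd u w = symd w u.
Proof. apply/setP=> i; by rewrite !in_symd addbC. Qed.

Lemma symdxx u : symd u u = set0.
Proof. apply/setP=> i; by rewrite in_symd addbb inE. Qed.

Lemma symdKr u w : symd (symd u w) w = u.
Proof. apply/setP=> i; by rewrite !in_symd -addbA addbb addbF. Qed.

Lemma symd_step u q k : k \in symd u q ->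
  symd (symd u [set k]) q = symd u q :\ k.
Proof.
move=> hk; apply/setP=> i; move: hk; rewrite !in_symd !inE.
have [->|ne] := eqVneq i k; last by move=> _; case: (i \in u); case: (i \in q).
by case: (k \in u); case: (k \in q).
Qed.

Lemma back (s : vertex n -> vertex n) (H : Sinky s) q :
  forall u, s q :&: symd u q == set0 -> reaches s u q.
Proof.
suff: forall m u, #|symd u q| < m -> s q :&: symd u q == set0 -> reaches s u q.
  by move=> h u; apply: h (ltnSn _).
elim=> [//|m IH] u hm h0.
have [e0|[k hk]] := set_0Vmem (s u :&: symd u q).
  have -> : u = q; last exact: connect0.
  apply: (sink_eq H (J := symd u q) (v := q)).
    by rewrite /is_sink_in in_face symdC subxx e0 eqxx.
  by rewrite /is_sink_in in_face symdxx sub0set h0.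
move: hk; rewrite inE => /andP[hks hkD].
apply: connect_trans (reach_edge hks) _.
apply: IH; rewrite symd_step //.
  by move: hm; rewrite (cardsD1 k) hkD.
apply/eqP; apply/setP=> i; move/eqP/setP: h0 => /(_ i); rewrite !inE.
by case: (i \in s q); case: (i == k); case: (i \in symd u q).
Qed.

Lemma setI0P (A B : vertex n) :
  reflect (forall i, i \in B -> i \notin A) (A :&: B == set0).
Proof.
apply: (iffP eqP) => [h i hi | h].
  by move/setP: h => /(_ i); rewrite !inE hi andbT => ->.
apply/setP=> i; rewrite !inE; case hi: (i \in B); last by rewrite andbF.
by rewrite (negbTE (h _ hi)).
Qed.

Lemma tri a b c (J : vertex n) :
  symd a b \subset J -> symd b c \subset J -> symd a c \subset J.
Proof.
move=> /subsetP h1 /subsetP h2; apply/subsetP=> i.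
move: (h1 i) (h2 i); rewrite !in_symd.
by case: (i \in a); case: (i \in b); case: (i \in c) => //= _ _; auto.
Qed.

Lemma excl a c (J : vertex n) j :
  symd a c \subset J -> j \notin symd a c -> symd a c \subset J :\ j.
Proof.
move=> /subsetP h hj; apply/subsetP=> i hi; rewrite !inE (h _ hi) andbT.
by apply: contraNneq hj => <-.
Qed.

Lemma symd1 z j : symd z (symd z [set j]) = [set j].
Proof. apply/setP=> i; rewrite !in_symd addKb; done. Qed.

Lemma face_self J x : x \in face J x.
Proof. by rewrite in_face symdxx sub0set. Qed.

Lemma Sinky_ext (s1 s2 : vertex n -> vertex n) :
  (forall x, s1 x = s2 x) -> Sinky s1 -> Sinky s2.
Proof.
move=> e H J v; have [z [hz hu]] := H J v; exists z; split.
  by move: hz; rewrite /is_sink_in e.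
by move=> y hy; apply: hu; move: hy; rewrite /is_sink_in e.
Qed.

Lemma flip1 (s : vertex n -> vertex n) j :
  Sinky s -> Sinky (fun x => symd (s x) [set j]).
Proof.
move=> H J w.
pose s' := fun x => symd (s x) [set j].
change (exists! u, is_sink_in s' J w u).
case jJ : (j \in J); last first.
  have E : forall x, s' x :&: J = s x :&: J.
    move=> x; apply/setP=> i; rewrite !in_setI /s' in_symd in_set1.
    have [->|ne] := eqVneq i j; first by rewrite jJ !andbF.
    by rewrite addbF.
  have [z [hz hu]] := H J w; exists z; split; first by rewrite /is_sink_in E.
  by move=> y; rewrite /is_sink_in E; apply: hu.
set J0 := J :\ j.
have J0J : J0 \subset J by apply: subD1set.
have jJ0 : j \notin J0 by rewrite !inE eqxx.
have key : forall x, (s' x :&: J == set0) = (s x :&: J0 == set0) && (j \in s x).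
  move=> x; apply/idP/idP.
    move/setI0P=> h; move: (h j jJ); rewrite /s' in_symd inE eqxx addbT negbK => ->.
    rewrite andbT; apply/setI0P=> i; rewrite !inE => /andP[ne iJ].
    by move: (h i iJ); rewrite /s' in_symd inE (negbTE ne) addbF.
  case/andP=> /setI0P h hj; apply/setI0P=> i iJ; rewrite /s' in_symd inE.
  have [->|ne] := eqVneq i j; first by rewrite hj.
  by rewrite addbF; apply: h; rewrite !inE ne.
have [z [hz _]] := H J w.
move: (hz); rewrite /is_sink_in in_face => /andP[zf /setI0P zs].
have zs0 : s z :&: J0 == set0.
  by apply/setI0P=> i hi; apply: zs; apply: (subsetP J0J).
have nonj : forall x, is_sink_in s' J w x -> j \in symd x z.
  move=> x; rewrite /is_sink_in in_face key => /andP[xf /andP[xs xj]].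
  apply/negPn/negP=> hj.
  have xz : symd x z \subset J0.
    apply: excl hj; apply: (tri (b := w)); last by [].
    by rewrite symdC.
  have exz : x = z.
    apply: (sink_eq H (J := J0) (v := x)).
      by rewrite /is_sink_in face_self xs.
    by rewrite /is_sink_in in_face xz zs0.
  by move: (zs j jJ); rewrite -exz xj.
have sunq : forall x y, is_sink_in s' J w x -> is_sink_in s' J w y -> x = y.
  move=> x y hx hy.
  have hxy : j \notin symd x y.
    move: (nonj _ hx) (nonj _ hy); rewrite !in_symd.
    by case: (j \in x); case: (j \in y); case: (j \in z).
  move: hx hy; rewrite /is_sink_in !in_face !key => /andP[xf /andP[xs _]] /andP[yf /andP[ys _]].
  have xy : symd x y \subset J0.
    apply: excl hxy; apply: (tri (b := w)); last by [].
    by rewrite symdC.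
  apply: (sink_eq H (J := J0) (v := x)).
    by rewrite /is_sink_in face_self xs.
  by rewrite /is_sink_in in_face xy ys.
have [t [ht _]] := H J0 (symd z [set j]).
move: ht; rewrite /is_sink_in in_face => /andP[tf ts].
have tfJ : symd w t \subset J.
  apply: (tri (b := z)) => //; apply: (tri (b := symd z [set j])).
    by rewrite symd1 sub1set.
  exact: subset_trans tf J0J.
case jt : (j \in s t).
  exists t; split; last by move=> y hy; apply: sunq => //; rewrite /is_sink_in in_face tfJ key ts jt.
  by rewrite /is_sink_in in_face tfJ key ts jt.
exfalso.
have tz : t = z.
  apply: (sink_eq H (J := J) (v := w)) => //.
  rewrite /is_sink_in in_face tfJ /=; apply/setI0P=> i iJ.
  have [->|ne] := eqVneq i j; first by rewrite jt.
  by move/setI0P: ts; apply; rewrite !inE ne.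
move: tf; rewrite tz => /subsetP /(_ j).
by rewrite !in_symd inE eqxx (negbTE jJ0) addbT addNb addbb => /(_ isT).
Qed.

Lemma flipX (s : vertex n -> vertex n) X :
  Sinky s -> Sinky (fun x => symd (s x) X).
Proof.
move=> H; move: {2}#|X| (erefl #|X|) => m; elim: m X => [|m IH] X hX.
  move/eqP: hX; rewrite cards_eq0 => /eqP ->.
  apply: Sinky_ext H => x; apply/setP=> i; by rewrite in_symd inE addbF.
have [j hj] : exists j, j \in X.
  by apply/set0Pn; rewrite -card_gt0 hX.
have hX' : #|X :\ j| = m by move: hX; rewrite (cardsD1 j) hj add1n => -[].
apply: Sinky_ext (flip1 j (IH _ hX')) => x.
apply/setP=> i; rewrite !in_symd in_setD1 in_set1.
have [->|ne] := eqVneq i j; first by rewrite hj /= addbF.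
by rewrite /= addbF.
Qed.

Lemma src_uniq (s : vertex n -> vertex n) (H : Sinky s) u q :
  symd u q \subset s u -> symd u q \subset s q -> u = q.
Proof.
move=> /subsetP hu /subsetP hq.
have H' := flipX (symd u q) H.
apply: (sink_eq H' (J := symd u q) (v := q)).
  rewrite /is_sink_in in_face symdC subxx /=; apply/setI0P=> i hi.
  by rewrite in_symd hi (hu _ hi).
rewrite /is_sink_in face_self /=; apply/setI0P=> i hi.
by rewrite in_symd hi (hq _ hi).
Qed.

Lemma fwd (s : vertex n -> vertex n) (Ho : is_orientation s) (H : Sinky s) q :
  forall u, symd u q \subset s q -> reaches s q u.
Proof.
suff: forall m u, #|symd u q| < m -> symd u q \subset s q -> reaches s q u.
  by move=> h u; apply: h (ltnSn _).
elim=> [//|m IH] u hm hsub.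
have [e0|[k hk]] := set_0Vmem (symd u q :\: s u).
  have -> : u = q; last exact: connect0.
  by apply: src_uniq hsub => //; rewrite -setD_eq0 e0.
move: hk; rewrite inE => /andP[hku hkD].
have hk' : k \in s (symd u [set k]) by move: (Ho u k); rewrite (negbTE hku) => /esym/negbFE.
apply: connect_trans _ (_ : reaches s (symd u [set k]) u).
  apply: IH; rewrite symd_step //.
    by move: hm; rewrite (cardsD1 k) hkD.
  exact: subset_trans (subD1set _ _) hsub.
by move: (reach_edge hk'); rewrite symdKr.
Qed.

End S.

Section Alg.
Variable n : nat.

Definition step (A : vertex n) (f : 'I_n -> vertex n) (j : 'I_n) (O : vertex n) : vertex n :=
  if [forall a in A, j \in f a] then (A :&: O) :|: [set j] else A.
Definition upd (f : 'I_n -> vertex n) (j : 'I_n) (O : vertex n) :=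
  fun i => if i == j then O else f i.

Fixpoint run (v : vertex n) (l : seq 'I_n) (A : vertex n) (f : 'I_n -> vertex n) : oracle_alg n :=
  match l with
  | [::] => Output (symd v A)
  | j :: l' => Query (symd v [set j]) (fun O => run v l' (step A f j O) (upd f j O))
  end.

Lemma run_queries v l A f s : alg_queries (run v l A f) s = size l.
Proof. by elim: l A f => //= j l IH A f; rewrite IH. Qed.

Variable s : vertex n -> vertex n.
Hypothesis Ho : is_orientation s.
Hypothesis H : Sinky s.
Variable v : vertex n.

Local Notation x i := (symd v [set i]).

Definition Inv (P : 'I_n -> Prop) (A : vertex n) (f : 'I_n -> vertex n) :=
  [/\ forall a, a \in A -> f a = s (x a),
      A \subset s v,
      (forall a b, a \in A -> b \in A -> a != b -> b \in s (x a)) &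
      (forall i, P i -> exists2 a, a \in A & reaches s (x i) (x a))].

Lemma Inv_mono (P Q : 'I_n -> Prop) A f : (forall i, Q i -> P i) -> Inv P A f -> Inv Q A f.
Proof. by move=> hQ [h1 h2 h3 h4]; split => // i /hQ /h4. Qed.

Lemma nx a : a \in s v -> a \notin s (x a).
Proof. by rewrite Ho. Qed.

Lemma hop a b : a \in s v -> b \in s v -> a \notin s (x b) -> reaches s (x a) (x b).
Proof.
move=> ha hb hab; apply: back => //; apply/setI0P=> i.
rewrite !in_symd !in_set1.
have [->|nia] := eqVneq i a; first by move=> _; [].
have [->|nib] := eqVneq i b; first by move=> _; exact: nx.
by rewrite addbF addbb.
Qed.

Lemma step_ok P A f j : j \in s v -> Inv P A f ->
  Inv (fun i => P i \/ i = j) (step A f j (s (x j))) (upd f j (s (x j))).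
Proof.
move=> hj [h1 h2 h3 h4]; rewrite /step.
case: ifP => c.
  split.
  - move=> a; rewrite /upd !inE; have [->//|ne] := eqVneq a j.
    by rewrite orbF => /andP[/h1].
  - apply/subsetP=> a; rewrite !inE; case/orP=> [/andP[/(subsetP h2)]//|/eqP->//].
  - move=> a b; rewrite !inE.
    case/orP=> [/andP[aA aO]|/eqP->]; case/orP=> [/andP[bA bO]|/eqP->] //.
    + exact: h3.
    + move=> _; move/forall_inP: c => /(_ a aA); by rewrite h1.
    + by rewrite eqxx.
  - move=> i [/h4[a aA ra]|->]; last by exists j; rewrite ?inE ?eqxx ?orbT //; apply: connect0.
    case aO: (a \in s (x j)).
      by exists a => //; rewrite !inE aA aO.
    exists j; first by rewrite !inE eqxx orbT.
    apply: connect_trans ra _; apply: hop; rewrite ?aO //.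
    exact: (subsetP h2).
split => //.
- move=> a aA; rewrite /upd; have [->//|_] := eqVneq a j; exact: h1.
- move=> i [/h4 //|->].
  move/negbT/forall_inPn: c => [a aA ja].
  exists a => //; apply: hop => //; first exact: (subsetP h2).
  by rewrite -h1.
Qed.

Lemma run_ok l P A f : {subset l <= s v} -> Inv P A f ->
  exists2 A', alg_output (run v l A f) s = symd v A' &
    exists f', Inv (fun i => P i \/ i \in l) A' f'.
Proof.
elim: l P A f => [|j l IH] P A f hl hI /=.
  exists A => //; exists f; apply: Inv_mono hI => i [//|//].
have hj : j \in s v by apply: hl; rewrite inE eqxx.
have [|A' e [f' hI']] := IH _ _ _ _ (step_ok hj hI).
  by move=> i il; apply: hl; rewrite inE il orbT.
exists A' => //; exists f'; apply: Inv_mono hI' => i [hP|].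
  by left; left.
rewrite inE => /orP[/eqP->|il]; [by left; right | by right].
Qed.

End Alg.

Unset Implicit Arguments.

Theorem lemma5 (n : nat) :
  exists A : vertex n -> vertex n -> oracle_alg n,
    forall (s : vertex n -> vertex n), is_USO s ->
    forall v : vertex n,
      (alg_queries (A v (s v)) s <= #|s v|)%N /\
      (forall u, u \in out_nbrs s v -> reaches s u (alg_output (A v (s v)) s)).
Proof.
exists (fun (v sv : vertex n) => run v (enum sv) set0 (fun _ => set0)).
move=> s [Ho H] v; split; first by rewrite run_queries cardE.
have hI : Inv s v (fun _ => False) set0 (fun _ => set0).
  by split => //; [move=> a; rewrite inE | rewrite sub0set | move=> a b; rewrite inE].
have hl : {subset enum (s v) <= s v} by move=> i; rewrite mem_enum.
have [A' -> [f' [h1 h2 h3 h4]]] := run_ok Ho H hl hI.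
move=> u /imsetP[k hk ->].
have [|a aA ra] := h4 k; first by right; rewrite mem_enum.
apply: connect_trans ra _; apply: fwd => //.
apply/subsetP=> i; rewrite !in_symd in_set1.
rewrite -!addbA (addbC (i \in A')) !addbA addbb /=.
have [->|ne] := eqVneq i a; first by rewrite aA.
rewrite /= => iA; apply: h3 => //; by rewrite eq_sym.
Qed.
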